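(* Let $E$ be an $n$-dimensional normed space over $K$ such that $\dim_{K^\vee}E^\vee=1$. Then all $(n-1)$-dimensional normed spaces of the form $E/[u]$ with $u\in E\setminus\{0\}$ are isometrically isomorphic to each other.
   Context: $K$ is a complete non-archimedean non-trivially valued field which is not spherically complete; $K^\vee$ is a fixed spherically complete immediate extension of $K$. Normed spaces are finite-dimensional non-archimedean normed spaces over $K$; $[u]$ is the $K$-span of $u$ and $E/[u]$ has the quotient norm. A subset $X\subseteq E\setminus\{0\}$ is orthogonal if $\|\sum\lambda_ix_i\|=\max\|\lambda_ix_i\|$ for finitely many distinct $x_i\in X$, $\lambda_i\in K$; $\dim_{K^\vee}E^\vee$ denotes the cardinality of a maximal orthogonal subset of $E$. *)

(* Defs.v *)
From HB Require Import structures.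
From mathcomp Require Import all_boot all_order all_algebra.
From mathcomp Require Import boolp classical_sets reals.
Set Implicit Arguments. Unset Strict Implicit. Unset Printing Implicit Defensive.
Import Order.TTheory GRing.Theory Num.Theory.
Local Open Scope ring_scope.
Local Open Scope classical_set_scope.

Section Defs.
Variables (R : realType) (K : fieldType).

Definition is_nonarch_abs (v : K -> R) : Prop :=
  [/\ forall x, 0 <= v x,
      forall x, v x = 0 <-> x = 0,
      forall x y, v (x * y) = v x * v y &
      forall x y, v (x + y) <= Num.max (v x) (v y)].

Definition nontrivially_valued (v : K -> R) : Prop :=
  exists x, v x != 0 /\ v x != 1.

Definition valued_complete (v : K -> R) : Prop :=
  forall u : nat -> K,
    (forall e : R, 0 < e -> exists M : nat,
        forall m n, (M <= m)%N -> (M <= n)%N -> v (u m - u n) < e) ->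
    exists l : K, forall e : R, 0 < e -> exists M : nat,
        forall n, (M <= n)%N -> v (u n - l) < e.

Definition spherically_complete (v : K -> R) : Prop :=
  forall (a : nat -> K) (r : nat -> R),
    (forall n, 0 < r n) ->
    (forall n x, v (x - a n.+1) <= r n.+1 -> v (x - a n) <= r n) ->
    exists x, forall n, v (x - a n) <= r n.

Variable E : vectType K.

Definition is_nonarch_norm (v : K -> R) (N : E -> R) : Prop :=
  [/\ forall x, 0 <= N x,
      forall x, N x = 0 <-> x = 0,
      forall (a : K) x, N (a *: x) = v a * N x &
      forall x y, N (x + y) <= Num.max (N x) (N y)].

Definition orthogonal_set (N : E -> R) (X : set E) : Prop :=
  (forall x, X x -> x != 0) /\
  forall (s : seq E) (c : E -> K), uniq s -> (forall x, x \in s -> X x) ->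
    N (\sum_(x <- s) c x *: x) = \big[Num.max/0]_(x <- s) N (c x *: x).

Definition maximal_orthogonal_set (N : E -> R) (X : set E) : Prop :=
  orthogonal_set N X /\
  forall Y : set E, orthogonal_set N Y -> X `<=` Y -> Y = X.

(* dim_{K^vee} E^vee = 1 : a maximal orthogonal subset of E has cardinality 1 *)
Definition dual_dim_one (N : E -> R) : Prop :=
  exists x0 : E, maximal_orthogonal_set N [set x0].

Definition quot_norm (N : E -> R) (u x : E) : R :=
  inf [set N (x - a *: u) | a in [set: K]].

(* E/[u] and E/[w] (with quotient norms) are isometrically isomorphic:
   a K-linear T : E -> E inducing a well-defined bijection
   E/[u] -> E/[w], x + [u] |-> T x + [w], which preserves quotient norms. *)
Definition quot_isometric (N : E -> R) (u w : E) : Prop :=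
  exists T : {linear E -> E},
    [/\ forall x, (T x \in <[w]>%VS) <-> (x \in <[u]>%VS),
        forall y, exists x, y - T x \in <[w]>%VS &
        forall x, quot_norm N w (T x) = quot_norm N u x].

End Defs.

(* Main.v *)
Require Import Defs.
From HB Require Import structures.
From mathcomp Require Import all_boot all_order all_algebra.
From mathcomp Require Import boolp classical_sets reals.
Import Order.TTheory GRing.Theory Num.Theory.
Local Open Scope ring_scope.
Set Implicit Arguments. Unset Strict Implicit.
Local Open Scope classical_set_scope.

Section Basic.
Variables (R : realType) (K : fieldType) (v : K -> R) (hv : is_nonarch_abs v).
Variables (E : vectType K) (N : E -> R) (hN : is_nonarch_norm v N).

Lemma v_ge0 x : 0 <= v x. Proof. by case: hv. Qed.
Lemma v0 : v 0 = 0. Proof. by case: hv => _ h _ _; apply/h. Qed.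
Lemma v_eq0 x : (v x == 0) = (x == 0).
Proof. case: hv => _ h _ _; apply/eqP/eqP; by move/h. Qed.
Lemma vM x y : v (x * y) = v x * v y. Proof. by case: hv. Qed.
Lemma v1 : v 1 = 1.
Proof.
have h : v 1 * v 1 = v 1 * 1 by rewrite -vM mulr1 mulr1.
have nz : v 1 != 0 by rewrite v_eq0 oner_eq0.
by apply: (mulfI nz); rewrite h.
Qed.
Lemma vN1 : v (-1) = 1.
Proof.
have h : v (-1) ^+ 2 = 1 by rewrite expr2 -vM mulrNN mulr1 v1.
have := v_ge0 (-1). move/eqP: h; rewrite sqrf_eq1 => /orP[/eqP //|/eqP ->].
by rewrite ler0N1.
Qed.
Lemma vV x : x != 0 -> v x^-1 = (v x)^-1.
Proof.
move=> nz; have h : v x * v x^-1 = 1 by rewrite -vM mulfV // v1.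
have : v x != 0 by rewrite v_eq0.
move=> vnz; apply: (mulfI vnz); by rewrite h mulfV.
Qed.

Lemma N_ge0 x : 0 <= N x. Proof. by case: hN. Qed.
Lemma N0 : N 0 = 0. Proof. by case: hN => _ h _ _; apply/h. Qed.
Lemma N_eq0 x : (N x == 0) = (x == 0).
Proof. case: hN => _ h _ _; apply/eqP/eqP; by move/h. Qed.
Lemma N_gt0 x : x != 0 -> 0 < N x.
Proof. by move=> nz; rewrite lt_def N_eq0 nz N_ge0. Qed.
Lemma NZ a x : N (a *: x) = v a * N x. Proof. by case: hN. Qed.
Lemma ND x y : N (x + y) <= Num.max (N x) (N y). Proof. by case: hN. Qed.
Lemma NN x : N (- x) = N x.
Proof. by rewrite -scaleN1r NZ vN1 mul1r. Qed.
Lemma NB x y : N (x - y) = N (y - x).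
Proof. by rewrite -NN opprB. Qed.
Lemma ND_le x y r : N x <= r -> N y <= r -> N (x + y) <= r.
Proof. move=> hx hy; apply: le_trans (ND x y) _; by rewrite ge_max hx hy. Qed.
Lemma ND_lt x y r : N x < r -> N y < r -> N (x + y) < r.
Proof. move=> hx hy; apply: le_lt_trans (ND x y) _; by rewrite gt_max hx hy. Qed.
Lemma N_strict x y : N x < N y -> N (x + y) = N y.
Proof.
move=> lt; apply/eqP; rewrite eq_le; apply/andP; split.
  by apply: ND_le => //; apply: ltW.
have e : y = (x + y) + - x by rewrite addrC addKr.
have := ND (x + y) (- x); rewrite -e NN.
rewrite le_max => /orP[//|h]; by rewrite leNgt lt in h.
Qed.
End Basic.

Section Quot.
Variables (R : realType) (K : fieldType) (v : K -> R) (hv : is_nonarch_abs v).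
Variables (E : vectType K) (N : E -> R) (hN : is_nonarch_norm v N).
Local Notation q := (quot_norm N).

Lemma q_hasinf u x : has_inf [set N (x - a *: u) | a in [set: K]].
Proof.
split; first by exists (N (x - 0 *: u)), 0.
by exists 0 => _ [a _ <-]; exact: N_ge0 hN _.
Qed.

Lemma q_le u x a : q u x <= N (x - a *: u).
Proof. by apply: (ge_inf (q_hasinf u x).2); exists a. Qed.

Lemma q_lb u x r : (forall a, r <= N (x - a *: u)) -> r <= q u x.
Proof. move=> h; apply: lb_le_inf; first by exists (N (x - 0 *: u)), 0.
by move=> _ [a _ <-]. Qed.

Lemma q_ge0 u x : 0 <= q u x.
Proof. by apply: q_lb => a; exact: N_ge0 hN _. Qed.

Lemma q_leN u x : q u x <= N x.
Proof. by have := q_le u x 0; rewrite scale0r subr0. Qed.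

Lemma q_adh u x r : q u x < r -> exists a, N (x - a *: u) < r.
Proof.
move=> lt; have gt : 0 < r - q u x by rewrite subr_gt0.
have [e [a _ <-] ea] := inf_adherent gt (q_hasinf u x).
by exists a; move: ea; rewrite (_ : inf _ = q u x) // addrCA subrr addr0.
Qed.

Lemma q_shift u x y : x - y \in <[u]>%VS -> q u x = q u y.
Proof.
case/vlineP => b hb; have -> : x = y + b *: u by rewrite -hb addrC subrK.
rewrite /quot_norm; congr inf.
apply/seteqP; split => _ [a _ <-].
  by exists (a - b) => //; congr N; rewrite scalerBl opprB addrA.
by exists (a + b) => //; congr N; rewrite [a + b]addrC scalerDl opprD addrA addrK.
Qed.

Lemma q_line u x : x \in <[u]>%VS -> q u x = 0.
Proof.
case/vlineP => b ->; apply/eqP; rewrite eq_le q_ge0 andbT.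
by have := q_le u (b *: u) b; rewrite subrr (N0 hN).
Qed.

End Quot.

Section Swap.
Variables (R : realType) (K : fieldType) (v : K -> R) (hv : is_nonarch_abs v).
Variables (E : vectType K) (N : E -> R) (hN : is_nonarch_norm v N).
Local Notation q := (quot_norm N).

Lemma q_swap u w h : 0 < N w -> q u w * N h < q u h * N w -> q u h <= q w h.
Proof.
move=> Nw lt; rewrite leNgt; apply/negP => ltB.
have [b hb] := q_adh hN ltB.
have hA : q u h <= N h := q_leN hN u h.
have hbh : N (h - b *: w) < N h := lt_le_trans hb hA.
have Nbw : N (b *: w) = N h.
  apply/eqP; rewrite eq_le; apply/andP; split.
    have -> : b *: w = h - (h - b *: w) by rewrite opprB addrC subrK.
    by apply: (ND_le hN) => //; rewrite (NN hv hN) (ltW hbh).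
  have e : h = (h - b *: w) + b *: w by rewrite subrK.
  have := ND hN (h - b *: w) (b *: w); rewrite -e le_max => /orP[h1|//].
  by rewrite leNgt hbh in h1.
move: Nbw; rewrite (NZ hN) => Nbw.
have vb : 0 < v b.
  rewrite lt_def (v_ge0 hv) andbT; apply/eqP => vb0.
  move: lt hA; rewrite -Nbw vb0 !mul0r mulr0 => lt hA.
  have e : q u h = 0 by apply/eqP; rewrite eq_le hA (q_ge0 hN).
  by rewrite e mul0r ltxx in lt.
have lt2 : q u w < q u h / v b.
  by rewrite ltr_pdivlMr // -Nbw mulrA ltr_pM2r // in lt *.
have [a ha] := q_adh hN lt2.
have := q_le hN u h (b * a).
have -> : h - (b * a) *: u = (h - b *: w) + b *: (w - a *: u).
  by rewrite scalerBr scalerA addrA subrK.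
move=> hle; have : N ((h - b *: w) + b *: (w - a *: u)) < q u h.
  apply: (ND_lt hN) => //; rewrite (NZ hN).
  by move: ha; rewrite ltr_pdivlMr // mulrC.
by rewrite ltNge hle.
Qed.
End Swap.

Lemma inv_small (R : realType) (d : R) : 0 < d ->
  exists M : nat, forall j, (M <= j)%N -> (j.+1%:R : R)^-1 < d.
Proof.
move=> d0; exists (Num.bound d^-1) => j hj.
have d1 : 0 <= d^-1 by rewrite invr_ge0 ltW.
have b := archi_boundP d1.
rewrite invf_plt ?posrE ?ltr0Sn //.
apply: (lt_le_trans b); rewrite ler_nat; exact: leqW.
Qed.

Lemma inv_mono (R : realType) (m j : nat) : (m <= j)%N -> (j.+1%:R : R)^-1 <= (m.+1%:R)^-1.
Proof. by move=> h; rewrite lef_pV2 ?posrE ?ltr0Sn // ler_nat. Qed.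

Lemma idA (V : zmodType) (x y z w : V) : x - w - z = (x - (y + z)) + (y - w).
Proof. by rewrite opprD [x + (- y - z)]addrA addrACA subrK [- z - w]addrC addrA. Qed.

Section Chain.
Variables (R : realType) (K : fieldType) (v : K -> R) (hv : is_nonarch_abs v).
Variable (hc : valued_complete v).
Variables (E : vectType K) (N : E -> R) (hN : is_nonarch_norm v N).

Fixpoint chain (t : R) (s : seq E) : Prop :=
  if s is e :: s' then
    (forall b z, z \in <<s'>>%VS -> t * N (b *: e) <= N (b *: e + z)) /\ chain t s'
  else True.

Lemma closed_span t s : 0 < t -> chain t s -> forall x,
  (forall eps, 0 < eps -> exists2 y, y \in <<s>>%VS & N (x - y) < eps) ->
  x \in <<s>>%VS.
Proof.
move=> t0; elim: s => [|e s IH] /=.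
  move=> _ x hx; rewrite span_nil memv0; apply/negP => /negP nx.
  have [y] := hx _ (N_gt0 hN nx); rewrite span_nil memv0 => /eqP ->.
  by rewrite subr0 ltxx.
move=> [Qe ch] x hx.
have sub : (<<s>> <= <<e :: s>>)%VS by rewrite span_cons addvSr.
have [e0|enz] := eqVneq e 0.
  apply: (subvP sub); apply: IH => // eps /hx [y]; rewrite span_cons e0.
  case/memv_addP => y1 /vlineP [k ->] [z zs ->]; rewrite scaler0 add0r => h.
  by exists z.
have Ne := N_gt0 hN enz.
have /choice [f hf] : forall j : nat, exists bz : K * E,
    bz.2 \in <<s>>%VS /\ N (x - (bz.1 *: e + bz.2)) < (j.+1%:R)^-1.
  move=> j; have jp : 0 < (j.+1%:R : R)^-1 by rewrite invr_gt0 ltr0Sn.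
  have [y] := hx _ jp.
  rewrite span_cons => /memv_addP [y1 /vlineP [k ->] [z zs ->]] h.
  by exists (k, z).
have cauchy : forall eps, 0 < eps -> exists M : nat, forall m n,
    (M <= m)%N -> (M <= n)%N -> v ((f m).1 - (f n).1) < eps.
  move=> eps eps0; have [M hM] := inv_small (mulr_gt0 (mulr_gt0 eps0 t0) Ne).
  exists M => m n hm hn.
  have zz : (f m).2 - (f n).2 \in <<s>>%VS by rewrite memvB //; [case: (hf m)|case: (hf n)].
  have := Qe ((f m).1 - (f n).1) _ zz.
  pose ym := (f m).1 *: e + (f m).2; pose yn := (f n).1 *: e + (f n).2.
  have -> : ((f m).1 - (f n).1) *: e + ((f m).2 - (f n).2) = ym - yn.
    by rewrite /ym /yn scalerBl opprD addrACA.
  have -> : ym - yn = (x - yn) - (x - ym) by rewrite [in RHS]opprB [in RHS]addrC [in RHS]addrA subrK.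
  move=> h1.
  have h2 : N ((x - yn) - (x - ym)) < (M.+1%:R)^-1.
    apply: (ND_lt hN); rewrite ?(NN hv hN).
      by apply: lt_le_trans (proj2 (hf n)) (inv_mono _ hn).
    by apply: lt_le_trans (proj2 (hf m)) (inv_mono _ hm).
  have := le_lt_trans h1 (lt_trans h2 (hM M (leqnn M))); rewrite (NZ hN) mulrCA mulrA.
  by rewrite (ltr_pM2r Ne) (ltr_pM2r t0).
have [b hb] := hc cauchy.
have xb : x - b *: e \in <<s>>%VS.
  apply: IH => // eps eps0.
  have [M1 hM1] := hb (eps / N e) (divr_gt0 eps0 Ne).
  have [M2 hM2] := inv_small eps0.
  pose j := maxn M1 M2.
  exists (f j).2; first by case: (hf j).
  rewrite (idA _ ((f j).1 *: e)) -scalerBl.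
  apply: (ND_lt hN).
    by apply: lt_trans (proj2 (hf j)) (hM2 j (leq_maxr _ _)).
  rewrite (NZ hN) -ltr_pdivlMr //; exact: hM1 (leq_maxl _ _).
have -> : x = b *: e + (x - b *: e) by rewrite addrC subrK.
by rewrite span_cons; apply: memv_add => //; apply: memvZ; apply: memv_line.
Qed.
End Chain.

Section Extend.
Variables (R : realType) (K : fieldType) (v : K -> R) (hv : is_nonarch_abs v).
Variable (hc : valued_complete v).
Variables (E : vectType K) (N : E -> R) (hN : is_nonarch_norm v N).

Lemma extend t s x : 0 < t -> t < 1 -> chain N t s -> x \notin <<s>>%VS ->
  exists e, chain N t (e :: s) /\ e \notin <<s>>%VS.
Proof.
move=> t0 t1 ch xs.
pose S := (fun y : E => N (x - y)) @` [set y : E | y \in <<s>>%VS].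
have hS : has_inf S.
  split; first by exists (N (x - 0)), 0 => //=; rewrite mem0v.
  by exists 0 => _ [y _ <-]; exact: N_ge0 hN _.
have r0 : 0 <= inf S.
  apply: lb_le_inf; first by exists (N (x - 0)), 0 => //=; rewrite mem0v.
  by move=> _ [y _ <-]; exact: N_ge0 hN _.
have rpos : 0 < inf S.
  rewrite lt_def r0 andbT; apply/negP => /eqP r00; move/negP: xs; apply.
  apply: (closed_span hv hc hN t0 ch) => eps eps0.
  have [_ [y ys <-]] := inf_adherent eps0 hS.
  by rewrite r00 add0r => h; exists y.
have gap : 0 < inf S / t - inf S.
  by rewrite subr_gt0 ltr_pdivlMr // gtr_pMr.
have [_ [y ys <-]] := inf_adherent gap hS.
rewrite addrCA subrr addr0 => hy.
have Nt : t * N (x - y) < inf S by rewrite mulrC -ltr_pdivlMr.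
exists (x - y); split; last first.
  apply/negP => h; move/negP: xs; apply.
  have -> : x = (x - y) + y by rewrite subrK.
  by apply: memvD.
split => // b z zs.
have [->|bnz] := eqVneq b 0.
  by rewrite scale0r (N0 hN) mulr0 add0r; exact: N_ge0 hN _.
have -> : b *: (x - y) + z = b *: (x - (y - b^-1 *: z)).
  rewrite [in RHS]scalerBr [in RHS]scalerBr scalerA mulfV // scale1r.
  by rewrite opprB addrA scalerBr [in RHS]addrAC.
have vb : 0 < v b by rewrite lt_def (v_eq0 hv) bnz (v_ge0 hv).
rewrite !(NZ hN) mulrCA (ler_pM2l vb).
apply: (le_trans (ltW Nt)); apply: (ge_inf hS.2).
by exists (y - b^-1 *: z) => //=; rewrite memvB // memvZ.
Qed.
End Extend.

From mathcomp Require Import zify.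
Section Grow.
Variables (R : realType) (K : fieldType) (v : K -> R) (hv : is_nonarch_abs v).
Variable (hc : valued_complete v).
Variables (E : vectType K) (N : E -> R) (hN : is_nonarch_norm v N).

Lemma grow t : 0 < t -> t < 1 -> forall m s, chain N t s ->
  (\dim {:E} - \dim <<s>>%VS <= m)%N ->
  exists s', [/\ chain N t (s' ++ s), <<s' ++ s>>%VS = fullv & (size s' <= m)%N].
Proof.
move=> t0 t1 m; elim: m => [|m IH] s ch hm.
  exists [::]; split => //=; apply/eqP; rewrite eqEdim subvf /=.
  by rewrite -subn_eq0 -leqn0.
have [full|nfull] := eqVneq <<s>>%VS fullv.
  by exists [::].
have [x xs] : exists x, x \notin <<s>>%VS.
  apply/not_existsP => h; move/eqP: nfull; apply; apply/eqP.
  rewrite eqEsubv subvf /=; apply/subvP => y _.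
  by apply/negPn/negP; apply: h.
have [e [che es]] := extend hv hc hN t0 t1 ch xs.
have sub : (<<s>> <= <<e :: s>>)%VS by rewrite span_cons addvSr.
have lt : (\dim <<s>> < \dim <<e :: s>>)%N.
  rewrite ltn_neqAle (dimv_leqif_eq sub).2 dimvS // andbT.
  apply/negP => /eqP eq; move/negP: es; apply; rewrite eq.
  by rewrite span_cons; apply: (subvP (addvSl _ _)); apply: memv_line.
have hm' : (\dim {:E} - \dim <<e :: s>>%VS <= m)%N.
  have := dimvS (subvf <<e :: s>>%VS).
  move: hm lt; set a := \dim _; set b := \dim _; set c := \dim _ => hm lt hc2.
  lia.
have [s' [ch' full' sz]] := IH (e :: s) che hm'.
by exists (rcons s' e); rewrite cat_rcons size_rcons.
Qed.
End Grow.

Section HBound.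
Variables (R : realType) (K : fieldType) (v : K -> R) (hv : is_nonarch_abs v).
Variables (E : vectType K) (N : E -> R) (hN : is_nonarch_norm v N).

Lemma hbound t u s : 0 < t -> t <= 1 -> chain N t (s ++ [:: u]) ->
  forall h, h \in <<s>>%VS -> forall a, t ^+ size s * N h <= N (h + a *: u).
Proof.
move=> t0 t1; elim: s => [|e s IH] /=.
  move=> _ h; rewrite span_nil memv0 => /eqP -> a.
  by rewrite (N0 hN) mulr0; exact: N_ge0 hN _.
move=> [Qe ch] h; rewrite span_cons => /memv_addP [y1 /vlineP [k ->] [h2 h2s ->]] a.
set tot := k *: e + h2 + a *: u.
have zs : h2 + a *: u \in <<s ++ [:: u]>>%VS.
  by rewrite span_cat span_seq1; apply: memv_add => //; apply: memvZ; apply: memv_line.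
have q1 : t * N (k *: e) <= N tot by rewrite /tot -addrA; exact: Qe.
have q2 := IH ch h2 h2s a.
have q3 : N (h2 + a *: u) <= Num.max (N tot) (N (k *: e)).
  have e1 : tot + - (k *: e) = h2 + a *: u by rewrite /tot -[k *: e + h2 + a *: u]addrA addrC addrK.
  rewrite -e1.
  rewrite -(NN hv hN (k *: e)); exact: (ND hN tot (- (k *: e))).
have tn0 : 0 <= t ^+ size s by rewrite exprn_ge0 // ltW.
have tn1 : t ^+ size s <= 1 by rewrite exprn_ile1 // ltW.
have Ntot : 0 <= N tot by exact: N_ge0 hN _.
have a1 : t ^+ (size s).+1 * N (k *: e) <= N tot.
  rewrite exprSr -mulrA; apply: le_trans _ q1.
  by rewrite -[X in _ <= X]mul1r ler_wpM2r // mulr_ge0 ?(N_ge0 hN) // ltW.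
have a2 : t ^+ (size s).+1 * N h2 <= N tot.
  rewrite exprS -mulrA; apply: le_trans (ler_wpM2l (ltW t0) q2) _.
  apply: le_trans (ler_wpM2l (ltW t0) q3) _.
  rewrite /Num.max; case: ifP => _.
    by [].
  by rewrite -[X in _ <= X]mul1r ler_wpM2r.
apply: le_trans (ler_wpM2l _ (ND hN _ _)) _; first by rewrite exprn_ge0 // ltW.
by rewrite /Num.max; case: ifP.
Qed.
End HBound.

From mathcomp Require Import ring lra.

Lemma bern (R : realType) (e : R) (n : nat) : 0 <= e -> e <= 1 ->
  1 - n%:R * e <= (1 - e) ^+ n.
Proof.
move=> e0 e1; elim: n => [|n IH]; first by rewrite mul0r subr0 expr0.
rewrite exprSr -natr1.
have n0 : 0 <= n%:R :> R by [].
nra.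
Qed.

Lemma choose_t (R : realType) (th : R) (n : nat) : 0 <= th -> th < 1 ->
  exists t : R, [/\ 0 < t, t < 1 & th < t ^+ n].
Proof.
move=> th0 th1; pose e := (1 - th) / (n.+2)%:R.
have n1 : 0 < (n.+2)%:R :> R by rewrite ltr0Sn.
have e0 : 0 < e by rewrite divr_gt0 // subr_gt0.
have ee : e * (n.+2)%:R = 1 - th by rewrite /e divfK // gt_eqF.
have n0 : 0 <= n%:R :> R by [].
have e1 : e <= 1.
  have : (n.+2)%:R = n%:R + 2 :> R by rewrite -natr1 -natr1 -addrA.
  move=> hn; rewrite hn in ee; nra.
exists (1 - e); split.
- have : (n.+2)%:R = n%:R + 2 :> R by rewrite -natr1 -natr1 -addrA.
  move=> hn; rewrite hn in ee; nra.
- by rewrite ltrBlDr ltrDl.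
- apply: lt_le_trans (bern n (ltW e0) e1).
  have : (n.+2)%:R = n%:R + 2 :> R by rewrite -natr1 -natr1 -addrA.
  move=> hn; rewrite hn in ee; nra.
Qed.

Section Iso.
Variables (R : realType) (K : fieldType) (v : K -> R) (hv : is_nonarch_abs v).
Variable (hc : valued_complete v).
Variables (E : vectType K) (N : E -> R) (hN : is_nonarch_norm v N).
Local Notation q := (quot_norm N).

Lemma iso u w : u != 0 -> w != 0 -> q u w < N w -> q w u < N u ->
  quot_isometric N u w.
Proof.
move=> unz wnz quw qwu.
have Nu := N_gt0 hN unz; have Nw := N_gt0 hN wnz.
pose th := Num.max (q u w / N w) (q w u / N u).
have th0 : 0 <= th by rewrite le_max (divr_ge0 (q_ge0 hN _ _) (ltW Nw)).
have th1 : th < 1 by rewrite gt_max !ltr_pdivrMr // !mul1r quw qwu.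
have [t [t0 t1 tn]] := choose_t (\dim {:E}) th0 th1.
have chu : chain N t [:: u].
  split => // b z; rewrite span_nil memv0 => /eqP ->; rewrite addr0.
  by rewrite ler_piMl ?(N_ge0 hN) // ltW.
have [s' [ch full sz]] := grow hv hc hN t0 t1 chu (leqnn _).
pose c := t ^+ size s'.
have ct : th < c.
  apply: lt_le_trans tn _; rewrite /c ler_wiXn2l // ?ltW //.
  by apply: leq_trans sz _; exact: leq_subr.
have c0 : 0 < c by rewrite exprn_gt0.
pose H := <<s'>>%VS.
have hb : forall h, h \in H -> c * N h <= q u h.
  move=> h hH; apply: q_lb => // a; rewrite -scaleNr.
  have := hbound hv hN t0 (ltW t1) ch hH (- a). done.
have fullHu : (H + <[u]> = fullv)%VS by rewrite -span_seq1 -span_cat.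
have capHu : (H :&: <[u]> = 0)%VS.
  apply/eqP; rewrite -subv0; apply/subvP => x /memv_capP [xH xu].
  rewrite memv0 -(N_eq0 hN); apply/eqP.
  have := hb x xH; rewrite (q_line hN) // => h.
  apply/eqP; rewrite eq_le (N_ge0 hN) andbT.
  by rewrite -(pmulr_rle0 _ c0).
have qeq : forall h, h \in H -> q w h = q u h.
  move=> h hH; have [->|hnz] := eqVneq h 0.
    by rewrite !(q_line hN) // mem0v.
  have Nh := N_gt0 hN hnz.
  have l1 : q u w * N h < q u h * N w.
    apply: lt_le_trans (_ : c * N h * N w <= _); last first.
      by apply: ler_wpM2r; [exact: ltW | exact: hb].
    rewrite mulrAC (ltr_pM2r Nh) -ltr_pdivrMr //.
    by apply: le_lt_trans ct; rewrite le_max lexx.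
  have le1 := q_swap hv hN Nw l1.
  have l2 : q w u * N h < q w h * N u.
    apply: lt_le_trans (_ : c * N h * N u <= _); last first.
      apply: ler_wpM2r; [exact: ltW | apply: le_trans le1; exact: hb].
    rewrite mulrAC (ltr_pM2r Nh) -ltr_pdivrMr //.
    by apply: le_lt_trans ct; rewrite le_max lexx orbT.
  have le2 := q_swap hv hN Nu l2.
  by apply/eqP; rewrite eq_le le1 le2.
have capHw : (H :&: <[w]> = 0)%VS.
  apply/eqP; rewrite -subv0; apply/subvP => x /memv_capP [xH xw].
  rewrite memv0 -(N_eq0 hN); apply/eqP.
  have := hb x xH; rewrite -qeq // (q_line hN) // => h.
  apply/eqP; rewrite eq_le (N_ge0 hN) andbT.
  by rewrite -(pmulr_rle0 _ c0).
have fullHw : (H + <[w]> = fullv)%VS.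
  apply/eqP; rewrite eqEdim subvf /=.
  by rewrite dimv_disjoint_sum // -fullHu dimv_disjoint_sum // !dim_vline unz wnz.
pose T : {linear E -> E} := fun_of_lfun (daddv_pi H <[u]>).
have TH : forall x, T x \in H by move=> x; exact: memv_pi.
have Tid : forall x, x \in H -> T x = x by move=> x xH; exact: daddv_pi_id.
have Tu : forall x, x - T x \in <[u]>%VS.
  move=> x; have := @daddv_pi_add _ _ H <[u]>%VS x capHu; rewrite fullHu memvf => /(_ isT) e.
  by rewrite -{1}e addrC addKr memv_pi.
have Tw : forall x, T x \in <[w]>%VS -> T x = 0.
  by move=> x h; apply/eqP; rewrite -memv0 -capHw memv_cap TH h.
exists T; split.
- move=> x; split => h.
    by have := Tu x; rewrite Tw // subr0.
  suff -> : T x = 0 by rewrite mem0v.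
  apply/eqP; rewrite -memv0 -capHu memv_cap TH /=.
  have -> : T x = x - (x - T x) by rewrite opprB addrC subrK.
  by rewrite memvB // Tu.
- move=> y; have : y \in (H + <[w]>)%VS by rewrite fullHw memvf.
  case/memv_addP => h hH [p pw ->]; exists h.
  by rewrite Tid // addrC addKr.
- move=> x; rewrite qeq ?TH //; apply: q_shift.
  by rewrite -opprB memvN.
Qed.
End Iso.

Lemma maxr0 (R : realType) (x : R) : 0 <= x -> Num.max x 0 = x.
Proof. by move=> h; rewrite /Num.max ltNge h. Qed.

Lemma max0r (R : realType) (x : R) : 0 <= x -> Num.max 0 x = x.
Proof. by move=> h; rewrite /Num.max; case: ltP => // h'; apply/eqP; rewrite eq_le h' h. Qed.

Section Orth.
Variables (R : realType) (K : fieldType) (v : K -> R) (hv : is_nonarch_abs v).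
Variables (E : vectType K) (N : E -> R) (hN : is_nonarch_norm v N).
Local Notation q := (quot_norm N).

Lemma two p r : (forall a, N p <= N (p - a *: r)) ->
  forall al be, N (al *: p + be *: r) = Num.max (N (al *: p)) (N (be *: r)).
Proof.
move=> h al be; have [->|anz] := eqVneq al 0.
  by rewrite !scale0r add0r (N0 hN) max0r // (N_ge0 hN).
have e : al *: p + be *: r = al *: (p - (- (be / al)) *: r).
  by rewrite scaleNr opprK scalerDr scalerA mulrC divfK.
have lo : N (al *: p) <= N (al *: p + be *: r).
  rewrite e !(NZ hN); apply: ler_wpM2l; [exact: v_ge0 | exact: h].
have [le|lt] := leP (N (be *: r)) (N (al *: p)).
  apply/eqP; rewrite eq_le lo andbT.
  by apply: (ND_le hN).
by rewrite (N_strict hv hN lt).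
Qed.

Lemma orth2 p r : p != 0 -> r != 0 -> (forall a, N p <= N (p - a *: r)) ->
  orthogonal_set N [set x | x = p \/ x = r].
Proof.
move=> pnz rnz h; have pr : p != r.
  apply/negP => /eqP epr; have := h 1; rewrite scale1r epr subrr (N0 hN).
  by rewrite leNgt (N_gt0 hN rnz).
split; first by move=> x [->|->].
move=> s c.
have key : forall a b, a != b -> (a = p \/ a = r) -> (b = p \/ b = r) ->
    N (c a *: a + c b *: b) = Num.max (N (c a *: a)) (N (c b *: b)).
  move=> a b ab ha hb; case: ha hb ab => -> [->|->] ab; rewrite ?eqxx // in ab.
    exact: (two h).
  by rewrite addrC maxC (two h).
case: s => [|a [|b [|d s]]] /=.
- by rewrite !big_nil (N0 hN).
- by rewrite !big_cons !big_nil addr0 maxr0 // (N_ge0 hN).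
- rewrite !big_cons !big_nil addr0 maxr0 ?(N_ge0 hN) //.
  rewrite inE andbT => ab hs; apply: key => //; apply: hs; by rewrite !inE eqxx ?orbT.
- move=> U hs.
  have ha : a = p \/ a = r by apply: hs; rewrite !inE eqxx.
  have hb : b = p \/ b = r by apply: hs; rewrite !inE eqxx orbT.
  have hd : d = p \/ d = r by apply: hs; rewrite !inE eqxx !orbT.
  move: U; case: ha => ->; case: hb => ->; case: hd => ->;
    by rewrite /= !inE !eqxx /= ?orbT ?andbF.
Qed.
End Orth.

Section Final.
Variables (R : realType) (K : fieldType) (v : K -> R) (hv : is_nonarch_abs v).
Variables (E : vectType K) (N : E -> R) (hN : is_nonarch_norm v N).
Local Notation q := (quot_norm N).

Lemma compose u x w : quot_isometric N u x -> quot_isometric N x w ->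
  quot_isometric N u w.
Proof.
move=> [T1 [k1 s1 n1]] [T2 [k2 s2 n2]].
exists (T2 \o T1)%FUN; split.
- by move=> y /=; rewrite k2 k1.
- move=> y; have [z hz] := s2 y; have [y' hy'] := s1 z.
  exists y'; have -> : y - (T2 \o T1)%FUN y' = (y - T2 z) + T2 (z - T1 y').
    by rewrite /= linearB addrA subrK.
  by rewrite memvD // k2.
- by move=> y /=; rewrite n2 n1.
Qed.

Lemma nonorth x0 : maximal_orthogonal_set N [set x0] -> forall u, u != 0 ->
  q x0 u < N u /\ q u x0 < N x0.
Proof.
move=> [orth mx] u unz.
have x0nz : x0 != 0 by apply: orth.1.
have gen : forall p r, p != 0 -> r != 0 -> (p = x0 \/ r = x0) ->
    (forall a, N p <= N (p - a *: r)) -> False.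
  move=> p r pnz rnz hx h.
  have Y := orth2 hv hN pnz rnz h.
  have sub : [set x0] `<=` [set x | x = p \/ x = r].
    by move=> y ->; case: hx => ->; [left|right].
  have eq := mx _ Y sub.
  have hp : [set x0] p by rewrite -eq; left.
  have hr : [set x0] r by rewrite -eq; right.
  move: h; rewrite /= in hp hr; rewrite hp hr => /(_ 1).
  by rewrite scale1r subrr (N0 hN) leNgt (N_gt0 hN x0nz).
split.
  rewrite ltNge; apply/negP => le; apply: (gen u x0) => //; first by right.
  by move=> a; apply: le_trans le (q_le hN _ _ _).
rewrite ltNge; apply/negP => le; apply: (gen x0 u) => //; first by left.
by move=> a; apply: le_trans le (q_le hN _ _ _).
Qed.
End Final.

Unset Implicit Arguments. Set Strict Implicit.
Local Close Scope classical_set_scope.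

Theorem mainTheorem9 (R : realType) (K : fieldType) (v : K -> R)
  (hv : is_nonarch_abs v) (hnt : nontrivially_valued v)
  (hc : valued_complete v) (hnsc : ~ spherically_complete v)
  (E : vectType K) (N : E -> R) (hN : is_nonarch_norm v N)
  (hdim : dual_dim_one N) :
  forall u w : E, u != 0 -> w != 0 -> quot_isometric N u w.
Proof.
move=> u w unz wnz; have [x0 hx0] := hdim.
have x0nz : x0 != 0 by apply: hx0.1.1.
have [a1 a2] := nonorth hv hN hx0 unz.
have [b1 b2] := nonorth hv hN hx0 wnz.
apply: compose (iso hv hc hN unz x0nz a2 a1) (iso hv hc hN x0nz wnz b1 b2).
Qed.
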